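(* Let $Y_1,\ldots,Y_n\in L_2(\mathcal{I})$ and let $p$ be an integer with $1\le p<n$. Let $\hat K$ be the operator and $K^*$ the $(n-p)\times(n-p)$ matrix defined in the context. Then $\hat K$ and $K^*$ have the same nonzero eigenvalues. Moreover, if $\hat\theta\neq0$ is an eigenvalue of $K^*$ with eigenvector $\gamma=(\gamma_1,\ldots,\gamma_{n-p})'$, then the function $\hat\psi(\cdot)=\sum_{t=1}^{n-p}\gamma_t\{Y_t(\cdot)-\bar Y(\cdot)\}$ satisfies $\hat K\hat\psi=\hat\theta\,\hat\psi$, i.e. it is an eigenfunction of $\hat K$ for the eigenvalue $\hat\theta$.
   Context: $\mathcal{I}$ is a compact interval, $L_2(\mathcal{I})$ has inner product $\langle f,g\rangle=\int_{\mathcal{I}}fg$, and a kernel $L(u,v)$ acts as the integral operator $(Lg)(u)=\int_{\mathcal{I}}L(u,v)g(v)\,dv$. Put $\bar Y=n^{-1}\sum_{j=1}^nY_j$, and for $k=1,\ldots,p$, $\hat M_k(u,v)=\frac{1}{n-p}\sum_{j=1}^{n-p}\{Y_j(u)-\bar Y(u)\}\{Y_{j+k}(v)-\bar Y(v)\}$ and $\hat K(u,v)=\sum_{k=1}^p\int_{\mathcal{I}}\hat M_k(u,z)\hat M_k(v,z)\,dz$. For $k=0,1,\ldots,p$ let $G_k$ be the $(n-p)\times(n-p)$ matrix with $(t,s)$ entry $\langle Y_{t+k}-\bar Y,\,Y_{s+k}-\bar Y\rangle$, and define $K^*=(n-p)^{-2}\sum_{k=1}^pG_kG_0$. *)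

(* Defs.v *)
From HB Require Import structures.
From mathcomp Require Import all_boot all_order all_algebra.
From mathcomp Require Import all_classical all_reals all_analysis.
Unset Printing Implicit Defensive.
Import Order.TTheory GRing.Theory Num.Theory.
Local Open Scope classical_set_scope.
Local Open Scope ring_scope.

Section Defs.
Variable R : realType.
Notation mu := (@lebesgue_measure R).

Definition inL2 (a b : R) (f : R -> R) : Prop :=
  measurable_fun `[a, b] f /\
  (\int[mu]_(x in `[a, b]) ((f x) ^+ 2)%:E < +oo)%E.

(* f represents the zero element of L_2([a,b]) *)
Definition L2zero (a b : R) (f : R -> R) : Prop :=
  {ae mu, forall x, x \in `[a, b] -> f x = 0}.

Definition ip (a b : R) (f g : R -> R) : R :=
  fine (\int[mu]_(x in `[a, b]) (f x * g x)%:E).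

(* Ybar = n^-1 \sum_{j=1}^n Y_j   (Y indexed by 1..n) *)
Definition Ybar (n : nat) (Y : nat -> R -> R) (u : R) : R :=
  n%:R^-1 * \sum_(1 <= j < n.+1) Y j u.

Definition Yc (n : nat) (Y : nat -> R -> R) (j : nat) (u : R) : R :=
  Y j u - Ybar n Y u.

Definition Mhat (n p : nat) (Y : nat -> R -> R) (k : nat) (u v : R) : R :=
  (n - p)%:R^-1 * \sum_(1 <= j < (n - p).+1) Yc n Y j u * Yc n Y (j + k) v.

Definition Khat (a b : R) (n p : nat) (Y : nat -> R -> R) (u v : R) : R :=
  \sum_(1 <= k < p.+1) ip a b (Mhat n p Y k u) (Mhat n p Y k v).

Definition Kop (a b : R) (n p : nat) (Y : nat -> R -> R) (g : R -> R) (u : R) : R :=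
  ip a b (Khat a b n p Y u) g.

Definition Kop_eigenvalue (a b : R) (n p : nat) (Y : nat -> R -> R) (theta : R) : Prop :=
  exists g : R -> R, inL2 a b g /\ ~ L2zero a b g /\
    {ae mu, forall u, u \in `[a, b] -> Kop a b n p Y g u = theta * g u}.

(* G_k, (t,s) entry <Y_{t+k} - Ybar, Y_{s+k} - Ybar>, t,s = 1..n-p
   (ordinal t : 'I_(n-p) stands for index t+1) *)
Definition Gmx (a b : R) (n p : nat) (Y : nat -> R -> R) (k : nat) : 'M[R]_(n - p) :=
  \matrix_(t < n - p, s < n - p) ip a b (Yc n Y (t.+1 + k)) (Yc n Y (s.+1 + k)).

Definition Kstar (a b : R) (n p : nat) (Y : nat -> R -> R) : 'M[R]_(n - p) :=
  ((n - p)%:R ^- 2) *: \sum_(1 <= k < p.+1) (Gmx a b n p Y k *m Gmx a b n p Y 0).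

Definition psihat (n p : nat) (Y : nat -> R -> R) (gamma : 'cV[R]_(n - p)) (u : R) : R :=
  \sum_(t < n - p) gamma t 0 * Yc n Y t.+1 u.

End Defs.

Arguments inL2 {R}. Arguments L2zero {R}. Arguments ip {R}. Arguments Ybar {R}.
Arguments Yc {R}. Arguments Mhat {R}. Arguments Khat {R}. Arguments Kop {R}.
Arguments Kop_eigenvalue {R}. Arguments Gmx {R}. Arguments Kstar {R}.
Arguments psihat {R}.

(* Main.v *)
Require Import Defs.
From HB Require Import structures.
From mathcomp Require Import all_boot all_order all_algebra.
From mathcomp Require Import all_classical all_reals all_analysis.
From mathcomp Require Import ring lra zify.
Import Order.TTheory GRing.Theory Num.Theory.
Local Open Scope classical_set_scope.
Local Open Scope ring_scope.

Section L2.
Variables (R : realType) (a b : R).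
Local Notation mu := (@lebesgue_measure R).
Local Notation I := (`[a, b]%classic : set R).
Local Notation L2 := (inL2 a b).
Implicit Types f g h : R -> R.

Let mI := measurable_itv `[a, b].

Lemma L2_int {f} : L2 f -> mu.-integrable I (EFin \o (fun x => f x ^+ 2)).
Proof.
case=> mf fin; apply/integrableP; split.
  by apply/measurable_realfun.measurable_EFinP; exact: measurable_realfun.measurable_funM.
under eq_integral => x _ do rewrite /comp abse_EFin ger0_norm ?sqr_ge0 //.
exact: fin.
Qed.

Lemma int_L2 f : measurable_fun I f -> mu.-integrable I (EFin \o (fun x => f x ^+ 2)) -> L2 f.
Proof.
move=> mf /integrableP [_ fin]; split => //.
move: fin; under eq_integral => x _ do rewrite /comp abse_EFin ger0_norm ?sqr_ge0 //.
by [].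
Qed.

Lemma L2_prod {f g} : L2 f -> L2 g -> mu.-integrable I (EFin \o (fun x => f x * g x)).
Proof.
move=> Lf Lg.
have H : mu.-integrable I (fun x => (f x ^+ 2)%:E + (g x ^+ 2)%:E)%E.
  apply: integrableD; [exact: mI| exact: (L2_int Lf) | exact: (L2_int Lg)].
apply: le_integrable H; first exact: mI.
  apply/measurable_realfun.measurable_EFinP; exact: measurable_realfun.measurable_funM (proj1 Lf) (proj1 Lg).
move=> x _ /=; rewrite ?abse_EFin lee_fin.
rewrite (@ger0_norm _ (_ + _)); last by rewrite addr_ge0 ?sqr_ge0.
rewrite ler_norml; apply/andP; split; nra.
Qed.

Lemma L2D {f g} : L2 f -> L2 g -> L2 (fun x => f x + g x).
Proof.
move=> Lf Lg; apply: int_L2.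
  exact: measurable_realfun.measurable_funD (proj1 Lf) (proj1 Lg).
have H : mu.-integrable I (fun x => 2%:E * ((f x ^+ 2)%:E + (g x ^+ 2)%:E))%E.
  apply: integrableZl; first exact: mI.
  apply: integrableD; [exact: mI| exact: (L2_int Lf) | exact: (L2_int Lg)].
apply: le_integrable H; first exact: mI.
  apply/measurable_realfun.measurable_EFinP; apply: measurable_realfun.measurable_funM;
    exact: measurable_realfun.measurable_funD (proj1 Lf) (proj1 Lg).
move=> x _ /=; rewrite ?abse_EFin lee_fin.
rewrite !ger0_norm ?sqr_ge0 ?mulr_ge0 ?addr_ge0 ?sqr_ge0 //.
have := sqr_ge0 (f x - g x); nra.
Qed.

Lemma L2Z c {f} : L2 f -> L2 (fun x => c * f x).
Proof.
move=> Lf; apply: int_L2.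
  apply: measurable_realfun.measurable_funM => //; exact: (proj1 Lf).
have H : mu.-integrable I (fun x => (c ^+ 2)%:E * (f x ^+ 2)%:E)%E.
  apply: integrableZl; first exact: mI.
  exact: (L2_int Lf).
apply: le_integrable H; first exact: mI.
  apply/measurable_realfun.measurable_EFinP; apply: measurable_realfun.measurable_funM;
  apply: measurable_realfun.measurable_funM => //; exact: (proj1 Lf).
by move=> x _ /=; rewrite ?abse_EFin lee_fin exprMn.
Qed.

Lemma L20 : L2 (fun _ => 0).
Proof.
split => //.
under eq_integral => x _ do rewrite expr0n /=.
by rewrite integral0.
Qed.

Lemma L2_sum (T : eqType) (r : seq T) (c : T -> R) (F : T -> R -> R) :
  (forall i, i \in r -> L2 (F i)) -> L2 (fun x => \sum_(i <- r) c i * F i x).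
Proof.
elim: r => [|i r IH] H.
  under [X in L2 X]funext => x do rewrite big_nil; exact: L20.
under [X in L2 X]funext => x do rewrite big_cons.
apply: L2D; first by apply: L2Z; apply: H; rewrite mem_head.
by apply: IH => j jr; apply: H; rewrite in_cons jr orbT.
Qed.

Lemma ipC f g : ip a b f g = ip a b g f.
Proof. by rewrite /ip; congr fine; apply: eq_integral => x _; rewrite mulrC. Qed.

Lemma ip_sum (T : eqType) (r : seq T) (c : T -> R) (F : T -> R -> R) h :
  (forall i, i \in r -> L2 (F i)) -> L2 h ->
  ip a b (fun x => \sum_(i <- r) c i * F i x) h = \sum_(i <- r) c i * ip a b (F i) h.
Proof.
move=> H Lh; elim: r H => [|i r IH] H.
  rewrite big_nil /ip (eq_integral (fun=> 0%E)); last by move=> x _; rewrite big_nil mul0r.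
  by rewrite integral0.
have Li : L2 (F i) by apply: H; rewrite mem_head.
have Lr : forall j, j \in r -> L2 (F j) by move=> j jr; apply: H; rewrite in_cons jr orbT.
rewrite big_cons -IH //.
have E : ip a b (fun x => \sum_(j <- (i :: r)) c j * F j x) h =
   \int[mu]_(x in I) (c i * (F i x * h x) + (\sum_(j <- r) c j * F j x) * h x).
  by rewrite /ip /Rintegral; congr fine; apply: eq_integral => x _; rewrite big_cons mulrDl mulrA.
rewrite E RintegralD; first last.
- exact (L2_prod (@L2_sum _ _ c _ Lr) Lh).
- have -> : (fun x => c i * (F i x * h x)) = (fun x => (c i * F i x) * h x).
    by apply/funext => x; rewrite mulrA.
  exact (L2_prod (L2Z (c i) Li) Lh).
- exact: mI.
rewrite RintegralZl //; exact (L2_prod Li Lh).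
Qed.

Lemma ip_ae f g h : L2 f -> L2 g -> L2 h ->
  {ae mu, forall x, x \in `[a, b]%R -> g x = h x} -> ip a b f g = ip a b f h.
Proof.
move=> Lf Lg Lh H; rewrite /ip; congr fine.
apply: ae_eq_integral.
- exact: mI.
- apply/measurable_realfun.measurable_EFinP; exact: measurable_realfun.measurable_funM (proj1 Lf) (proj1 Lg).
- apply/measurable_realfun.measurable_EFinP; exact: measurable_realfun.measurable_funM (proj1 Lf) (proj1 Lh).
move: H; apply: filterS; first exact (ae_filter_ringOfSetsType mu).
by move=> x Hx Ix; rewrite Hx.
Qed.

End L2.
Lemma det0_row (F : fieldType) m (A : 'M[F]_m) t :
  (exists2 v : 'rV_m, v *m A = t *: v & v != 0) <-> \det (A - t%:M) = 0.
Proof.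
split.
  case=> v vA v0; apply/eqP/det0P; exists v => //.
  by rewrite mulmxBr vA mul_mx_scalar subrr.
move/eqP/det0P => [v v0 vA]; exists v => //.
by apply/eqP; rewrite -subr_eq0 -mul_mx_scalar -mulmxBr vA.
Qed.

Lemma eig_col (F : fieldType) m (A : 'M[F]_m) t :
  eigenvalue A t <-> exists2 v : 'cV_m, A *m v = t *: v & v != 0.
Proof.
have E : \det (A - t%:M) = \det (A^T - t%:M) by rewrite -det_tr linearB /= tr_scalar_mx.
have Ec : (exists2 v : 'cV_m, A *m v = t *: v & v != 0) <->
          (exists2 v : 'rV_m, v *m A^T = t *: v & v != 0).
  split=> [[v vA v0]|[v vA v0]].
    exists v^T; last by rewrite trmx_eq0.
    by rewrite -trmx_mul vA linearZ.
  exists v^T; last by rewrite trmx_eq0.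
  by rewrite -[A]trmxK -trmx_mul vA linearZ.
split.
  move/eigenvalueP => H; apply/Ec/det0_row; rewrite -E; exact/det0_row.
move/Ec/det0_row => H; apply/eigenvalueP/det0_row; rewrite E; exact H.
Qed.

Section Main.
Variables (R : realType) (a b : R) (n p : nat) (Y : nat -> R -> R).
Hypotheses (p1 : (1 <= p)%N) (pn : (p < n)%N)
  (LY : forall j, (1 <= j <= n)%N -> inL2 a b (Y j)).
Local Notation mu := (@lebesgue_measure R).
Local Notation L2 := (inL2 a b).
Local Notation N := (n - p)%N.
Local Notation e j := (Yc n Y (nat_of_ord j).+1).
Local Notation fk k j := (Yc n Y ((nat_of_ord j).+1 + k)%N).
Local Notation G k := (Gmx a b n p Y k).

Lemma LYbar : L2 (Ybar n Y).
Proof.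
have -> : Ybar n Y = fun u => n%:R^-1 * (\sum_(j <- index_iota 1 n.+1) 1 * Y j u).
  by apply/funext => u; rewrite /Ybar; congr (_ * _); apply: eq_bigr => j _; rewrite mul1r.
apply: L2Z; apply: L2_sum => j; rewrite mem_index_iota => /andP[j1 jn].
by apply: LY; rewrite j1 -ltnS.
Qed.

Lemma LYc i : (1 <= i <= n)%N -> L2 (Yc n Y i).
Proof.
move=> Hi.
have -> : Yc n Y i = fun u => Y i u + (-1) * Ybar n Y u.
  by apply/funext => u; rewrite /Yc mulN1r.
apply: L2D; first exact: LY.
exact: L2Z LYbar.
Qed.

Lemma Lfk k (j : 'I_N) : (k <= p)%N -> L2 (fk k j).
Proof.
move=> kp; apply: LYc; have := ltn_ord j; lia.
Qed.

Lemma Le (j : 'I_N) : L2 (e j).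
Proof. apply: LYc; have := ltn_ord j; lia. Qed.

Lemma Mh k u : Mhat n p Y k u = fun z => \sum_(j < N) (N%:R^-1 * e j u) * fk k j z.
Proof.
apply/funext => z; rewrite /Mhat big_add1 /= big_mkord mulr_sumr.
by apply: eq_bigr => j _; rewrite mulrA.
Qed.

Lemma LMh k u : (k <= p)%N -> L2 (Mhat n p Y k u).
Proof. by move=> kp; rewrite Mh; apply: L2_sum => j _; exact: Lfk. Qed.

Lemma Gsym k (i j : 'I_N) : G k i j = G k j i.
Proof. by rewrite !mxE ipC. Qed.

Lemma G0E (i j : 'I_N) : G 0 i j = ip a b (e i) (e j).
Proof. by rewrite mxE !addn0. Qed.

Lemma ipMh k u v : (1 <= k <= p)%N ->
  ip a b (Mhat n p Y k u) (Mhat n p Y k v) =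
  \sum_(j < N) \sum_(l < N) N%:R^-1 * e j u * (N%:R^-1 * e l v) * G k j l.
Proof.
move=> /andP[k1 kp].
rewrite {1}Mh ip_sum; last 2 first.
- by move=> j _; exact: Lfk.
- exact: LMh.
apply: eq_bigr => j _; rewrite ipC Mh ip_sum; last 2 first.
- by move=> l _; exact: Lfk.
- exact: Lfk.
rewrite mulr_sumr; apply: eq_bigr => l _.
by rewrite (mxE) ipC mulrA.
Qed.

Definition cK u (l : 'I_N) : R :=
  \sum_(1 <= k < p.+1) \sum_(j < N) N%:R^-1 * e j u * (N%:R^-1 * G k j l).

Lemma Kh u : Khat a b n p Y u = fun v => \sum_(l < N) cK u l * e l v.
Proof.
apply/funext => v; rewrite /Khat.
transitivity (\sum_(1 <= k < p.+1) \sum_(j < N) \sum_(l < N)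
   N%:R^-1 * e j u * (N%:R^-1 * e l v) * G k j l).
  by apply: eq_big_nat => k Hk; rewrite ipMh.
rewrite /cK.
under [RHS]eq_bigr => l _ do rewrite big_distrl /=.
under [RHS]eq_bigr => l _ do under eq_bigr => k _ do rewrite big_distrl /=.
rewrite [RHS]exchange_big /=; apply: eq_bigr => k _.
rewrite [RHS]exchange_big /=; apply: eq_bigr => j _.
apply: eq_bigr => l _; ring.
Qed.

Lemma KopE g u : L2 g -> Kop a b n p Y g u = \sum_(l < N) cK u l * ip a b (e l) g.
Proof.
move=> Lg; rewrite /Kop Kh ip_sum //; by move=> l _; exact: Le.
Qed.

Definition Acoef : 'M[R]_N := (N%:R ^- 2) *: \sum_(1 <= k < p.+1) G k.
Definition wcol g : 'cV[R]_N := \col_l ip a b (e l) g.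

Lemma KopM g u : L2 g -> Kop a b n p Y g u = \sum_(j < N) e j u * (Acoef *m wcol g) j 0.
Proof.
move=> Lg; rewrite KopE // /cK.
under eq_bigr => l _ do rewrite big_distrl /=.
under eq_bigr => l _ do under eq_bigr => k _ do rewrite big_distrl /=.
rewrite exchange_big /=.
under eq_bigr => k _ do rewrite exchange_big /=.
rewrite exchange_big /=; apply: eq_bigr => j _.
rewrite exchange_big /= !mxE big_distrr /=; apply: eq_bigr => l _.
rewrite !mxE summxE big_distrr /= big_distrl /= big_distrr /=.
apply: eq_bigr => k _; rewrite -exprVn expr2; ring.
Qed.

Lemma KstarE : Kstar a b n p Y = Acoef *m G 0.
Proof. by rewrite /Kstar /Acoef -scalemxAl mulmx_suml. Qed.

Lemma Lpsi gamma : L2 (psihat n p Y gamma).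
Proof. by apply: L2_sum => t _; exact: Le. Qed.

Lemma wpsi gamma : wcol (psihat n p Y gamma) = G 0 *m gamma.
Proof.
apply/matrixP => l z; rewrite !mxE (ord1 z) ipC /psihat ip_sum; last 2 first.
- by move=> t _; exact: Le.
- exact: Le.
by apply: eq_bigr => t _; rewrite G0E ipC mulrC.
Qed.

Lemma ip0 f : ip a b f (fun _ => 0) = 0.
Proof.
rewrite /ip (eq_integral (fun=> 0%E)); first by rewrite integral0.
by move=> x _; rewrite mulr0.
Qed.

Lemma Kop_psi theta gamma : Kstar a b n p Y *m gamma = theta *: gamma ->
  forall u, Kop a b n p Y (psihat n p Y gamma) u = theta * psihat n p Y gamma u.
Proof.
move=> H u; rewrite KopM; last exact: Lpsi.
rewrite wpsi mulmxA -KstarE H /psihat mulr_sumr.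
by apply: eq_bigr => j _; rewrite mxE; ring.
Qed.

Lemma psi_nz theta gamma : theta != 0 -> gamma != 0 ->
  Kstar a b n p Y *m gamma = theta *: gamma -> ~ L2zero a b (psihat n p Y gamma).
Proof.
move=> t0 g0 H Hz.
have W : wcol (psihat n p Y gamma) = 0.
  apply/matrixP => l z; rewrite !mxE.
  rewrite (@ip_ae _ a b _ _ (fun _ => 0)) ?ip0 //. all: try exact: Le. all: try exact: Lpsi. all: try exact: L20.
move: H; rewrite KstarE -mulmxA -wpsi W mulmx0 => /esym/eqP.
by rewrite scaler_eq0 (negbTE t0) (negbTE g0).
Qed.

Lemma Kop_eig theta : theta != 0 -> Kop_eigenvalue a b n p Y theta ->
  exists2 gamma : 'cV_N, Kstar a b n p Y *m gamma = theta *: gamma & gamma != 0.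
Proof.
move=> t0 [g [Lg [nz H]]].
set c := Acoef *m wcol g.
set gamma := theta^-1 *: c.
have Kg u : Kop a b n p Y g u = \sum_(j < N) e j u * c j 0 by rewrite KopM.
have Hae : {ae mu, forall u, u \in `[a, b]%R -> g u = psihat n p Y gamma u}.
  move: H; apply: filterS; first exact (ae_filter_ringOfSetsType mu).
  move=> u Hu uI; have := Hu uI; rewrite Kg => E.
  have -> : g u = theta^-1 * (theta * g u) by rewrite mulrA mulVf // mul1r.
  rewrite -E /psihat mulr_sumr; apply: eq_bigr => j _; rewrite /gamma [in RHS]mxE; ring.
have Wg : wcol g = G 0 *m gamma.
  rewrite -wpsi; apply/matrixP => l z; rewrite !mxE.
  apply: ip_ae => //; [exact: Le | exact: Lpsi].
have cg : c = theta *: gamma by rewrite /gamma scalerA mulfV // scale1r.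
exists gamma.
  by rewrite KstarE -mulmxA -Wg -cg.
apply/negP => /eqP g0; apply: nz.
move: H; apply: filterS; first exact (ae_filter_ringOfSetsType mu).
move=> u Hu uI; have := Hu uI; rewrite Kg cg g0 scaler0 big1 => [|j _]; last by rewrite mxE mulr0.
by move/esym/eqP; rewrite mulf_eq0 (negbTE t0) => /eqP.
Qed.

End Main.


Theorem proposition2 (R : realType) (a b : R) (n p : nat) (Y : nat -> R -> R) :
  a < b -> (1 <= p)%N -> (p < n)%N ->
  (forall j, (1 <= j <= n)%N -> inL2 a b (Y j)) ->
  (forall theta : R, theta != 0 ->
     (Kop_eigenvalue a b n p Y theta <-> eigenvalue (Kstar a b n p Y) theta)) /\
  (forall (theta : R) (gamma : 'cV[R]_(n - p)),
     theta != 0 -> gamma != 0 -> Kstar a b n p Y *m gamma = theta *: gamma ->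
     inL2 a b (psihat n p Y gamma) /\ ~ L2zero a b (psihat n p Y gamma) /\
     (forall u, u \in `[a, b] ->
        Kop a b n p Y (psihat n p Y gamma) u = theta * psihat n p Y gamma u)).
Proof.
move=> ab p1 pn LY; split.
  move=> theta t0; split.
    by move=> HK; apply/eig_col; apply: Kop_eig.
  move/eig_col => [gamma Hg g0].
  exists (psihat n p Y gamma); split; first exact: Lpsi.
  split; first exact: (@psi_nz R a b n p Y p1 pn LY _ _ t0 g0 Hg).
  by apply: nearW => u _; exact: Kop_psi.
move=> theta gamma t0 g0 Hg; split; first exact: Lpsi.
split; first exact: (@psi_nz R a b n p Y p1 pn LY _ _ t0 g0 Hg).
move=> u _; exact: Kop_psi.
Qed.
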